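(* Let $\mathcal{F}$ be a monotone family of graphs (closed under taking subgraphs) and let $C\ge 1$. Suppose there is a strategy $A$ for the $k$-CTP whose competitive ratio is at most $C$ on every road map $(G,E_* )$ with $|E_*|\le k$ such that $G\in\mathcal{F}$ and $G$ has no articulation point. Then there is a strategy $A'$ whose competitive ratio is at most $C$ on every road map $(G,E_* )$ with $|E_*|\le k$ and $G\in\mathcal{F}$.
   Context: The $k$-Canadian Traveller Problem ($k$-CTP): we are given an undirected connected graph $G=(V,E,\omega)$ with weights $\omega:E\to\mathbb{Q}^+$, a source $s\in V$ and a target $t\in V$, and a hidden set $E_*\subsetneq E$ of blocked edges with $|E_*|\le k$. The pair $(G,E_* )$ is a road map if $s$ and $t$ are connected in $G\setminus E_*$; only road maps are considered. A traveller starts at $s$ and must reach $t$. Initially $E_*$ is unknown; the traveller learns whether an edge is blocked exactly when he visits one of its endpoints. A (deterministic) strategy is an online algorithm which, given $G$, $\omega$, $s$, $t$, $k$, the sequence of vertices visited so far and the set of blocked edges revealed so far, chooses the next vertex, a neighbour of the current vertex through an edge not known to be blocked. The cost of the resulting $(s,t)$-walk is the sum of the weights of the traversed edges (with multiplicity). The competitive ratio of $A$ on $(G,E_* )$ is this cost divided by $d_{E_*}(s,t)$, the length of a shortest $(s,t)$-path in $G\setminus E_*$. A vertex $v$ is an articulation point of a connected graph $G$ if $G\setminus\{v\}$ is disconnected. *)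

(* Defs.v *)
(* Graphs: a finite ambient vertex type V; a graph is a
   vertex set S : {set V} and an edge set E : {set {set V}} of 2-subsets of S. *)
From mathcomp Require Import all_boot all_order all_algebra.
From mathcomp Require Import reals.
Set Implicit Arguments. Unset Strict Implicit. Unset Printing Implicit Defensive.
Import Order.TTheory GRing.Theory Num.Theory.

Local Open Scope ring_scope.
Section CTP.
Variable V : finType.

Definition wf_graph (S : {set V}) (E : {set {set V}}) : Prop :=
  forall e, e \in E -> #|e| = 2 /\ e \subset S.

Definition adj (E : {set {set V}}) : rel V := fun x y => [set x; y] \in E.

Definition gconnected (S : {set V}) (E : {set {set V}}) : Prop :=
  forall x y, x \in S -> y \in S -> connect (adj E) x y.

Definition del_vertex (S : {set V}) (E : {set {set V}}) (v : V) :=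
  (S :\ v, [set e in E | v \notin e]).

Definition is_articulation_point (S : {set V}) (E : {set {set V}}) (v : V) :=
  v \in S /\ ~ gconnected (del_vertex S E v).1 (del_vertex S E v).2.

Definition no_articulation_point (S : {set V}) (E : {set {set V}}) :=
  forall v, ~ is_articulation_point S E v.

Definition monotone_family (F : {set V} -> {set {set V}} -> Prop) : Prop :=
  forall (S S' : {set V}) (E E' : {set {set V}}), wf_graph S' E' -> S' \subset S -> E' \subset E ->
    F S E -> F S' E'.

(* A deterministic strategy: given the vertex set, edge set, weights, s, t, k,
   the sequence of vertices visited so far (starting with s, last = current
   vertex) and the set of blocked edges revealed so far, returns the next vertex. *)
Definition strategy :=
  {set V} -> {set {set V}} -> ({set V} -> rat) -> V -> V -> nat ->
  seq V -> {set {set V}} -> V.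

Definition revealed (Es : {set {set V}}) (h : seq V) : {set {set V}} :=
  [set e in Es | has (fun x => x \in e) h].

(* the walk x :: p taken after n moves (the traveller stops upon reaching t);
   returned as the tail p (the walk starts at s) *)
Fixpoint run (A : strategy) (S : {set V}) (E : {set {set V}}) (w : {set V} -> rat) (s t : V) (k : nat) (Es : {set {set V}})
    (n : nat) : seq V :=
  match n with
  | 0 => [::]
  | n'.+1 =>
      let p := run A S E w s t k Es n' in
      if last s p == t then p
      else rcons p (A S E w s t k (s :: p) (revealed Es (s :: p)))
  end.

Fixpoint walk_cost (w : {set V} -> rat) (x : V) (p : seq V) : rat :=
  match p with
  | [::] => 0
  | y :: p' => w [set x; y] + walk_cost w y p'
  end.

Definition open_adj (E Es : {set {set V}}) : rel V := adj (E :\: Es).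

Definition shortest_dist (E Es : {set {set V}}) (w : {set V} -> rat)
    (s t : V) (d : rat) : Prop :=
  (exists p, path (open_adj E Es) s p /\ last s p = t /\ walk_cost w s p = d) /\
  (forall p, path (open_adj E Es) s p -> last s p = t -> d <= walk_cost w s p).

Definition road_map (S : {set V}) (E : {set {set V}}) (w : {set V} -> rat)
    (s t : V) (k : nat) (Es : {set {set V}}) : Prop :=
  [/\ wf_graph S E, gconnected S E, (forall e, e \in E -> 0 < w e),
      s \in S /\ t \in S &
      [/\ Es \proper E, (#|Es| <= k)%N & connect (open_adj E Es) s t]].

Definition ratio_at_most (R : realType) (A : strategy) (S : {set V})
    (E : {set {set V}}) (w : {set V} -> rat) (s t : V) (k : nat)
    (Es : {set {set V}}) (C : R) :=
  exists n, let p := run A S E w s t k Es n in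
    [/\ last s p = t, path (open_adj E Es) s p &
        forall d, shortest_dist E Es w s t d ->
          ratr (walk_cost w s p) <= C * ratr d].

End CTP.

(* Main.v *)
Require Import Defs.
From mathcomp Require Import all_boot all_order all_algebra.
From mathcomp Require Import reals.
Set Implicit Arguments. Unset Strict Implicit. Unset Printing Implicit Defensive.
Import Order.TTheory GRing.Theory Num.Theory.
Local Open Scope ring_scope.

Fixpoint runf {V : eqType} (g : seq V -> V) (s t : V) (n : nat) : seq V :=
  match n with
  | 0 => [::]
  | n'.+1 => let p := runf g s t n' in
      if last s p == t then p else rcons p (g (s :: p))
  end.

Lemma run_runf (V : finType) (A : strategy V) S E w s t k Es n :
  run A S E w s t k Es n = runf (fun h => A S E w s t k h (revealed Es h)) s t n.
Proof. by elim: n => //= n ->. Qed.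

Definition valid {V : eqType} (g : seq V -> V) (s t : V) (p : seq V) :=
  forall i, (i < size p)%N -> nth s p i = g (s :: take i p) /\ last s (take i p) != t.

Lemma valid_rcons {V : eqType} (g : seq V -> V) s t p x :
  valid g s t (rcons p x) <-> [/\ valid g s t p, x = g (s :: p) & last s p != t].
Proof.
split.
- move=> H; split.
  + move=> i Hi; have Hi' : (i < size (rcons p x))%N by rewrite size_rcons ltnW.
    have [H1 H2] := H i Hi'.
    by rewrite nth_rcons Hi -cats1 takel_cat ?(ltnW Hi) in H1 H2 *.
  + have := H (size p); rewrite size_rcons ltnSn => /(_ isT) [].
    by rewrite nth_rcons ltnn eqxx -cats1 take_size_cat.
  + have := H (size p); rewrite size_rcons ltnSn => /(_ isT) [].
    by rewrite -cats1 take_size_cat.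
- case=> H Hx Hl i; rewrite size_rcons ltnS leq_eqVlt => /orP [/eqP ->|Hi].
  + by rewrite nth_rcons ltnn eqxx -cats1 take_size_cat.
  + by rewrite nth_rcons Hi -cats1 takel_cat ?(ltnW Hi) //; apply: H.
Qed.

Lemma valid_nil {V : eqType} (g : seq V -> V) s t : valid g s t [::].
Proof. by []. Qed.

Lemma runf_valid {V : eqType} (g : seq V -> V) s t n : valid g s t (runf g s t n).
Proof.
elim: n => //= n IH; case: ifP => // /negbT H.
by apply/valid_rcons.
Qed.

Lemma valid_runf {V : eqType} (g : seq V -> V) s t p :
  valid g s t p -> runf g s t (size p) = p.
Proof.
elim/last_ind: p => // p x IH /valid_rcons [Hp Hx Hl].
by rewrite size_rcons /= IH // (negbTE Hl) Hx.
Qed.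

Lemma valid_ext {V : eqType} (g g' : seq V -> V) s t p :
  (forall h, g (s :: h) = g' (s :: h)) -> valid g s t p -> valid g' s t p.
Proof. by move=> E H i Hi; rewrite -E; apply: H. Qed.

Lemma valid_cat {V : eqType} (g : seq V -> V) s t v p1 r :
  valid g s t p1 -> last s p1 = v ->
  (forall i, (i < size r)%N -> nth v r i = g (s :: p1 ++ take i r) /\ last v (take i r) != t) ->
  valid g s t (p1 ++ r).
Proof.
move=> H1 Hv H2 i; rewrite size_cat => Hi.
case: (ltnP i (size p1)) => Hip.
  by rewrite nth_cat Hip take_cat Hip; apply: H1.
have Hj : (i - size p1 < size r)%N by rewrite ltn_subLR.
have [E1 E2] := H2 _ Hj.
rewrite nth_cat ltnNge Hip /= take_cat ltnNge Hip /= last_cat Hv; split => //.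
by rewrite (set_nth_default v) // E1.
Qed.


Lemma first_split {V : eqType} (v : V) : forall (q : seq V) a, v \in a :: q ->
  exists q1 r, [/\ q = q1 ++ r, last a q1 = v & v \notin belast a q1].
Proof.
elim=> [|b q IH] a.
  by rewrite mem_seq1 => /eqP ->; exists [::], [::].
case: (eqVneq a v) => [->|Hav] Hv.
  by exists [::], (b :: q).
have Hv' : v \in b :: q by move: Hv; rewrite in_cons eq_sym (negbTE Hav).
have [q1 [r [-> Hl Hb]]] := IH b Hv'.
by exists (b :: q1), r; rewrite /= Hl in_cons eq_sym (negbTE Hav).
Qed.

Lemma last_split {V : eqType} (v : V) (q : seq V) a : v \in a :: q ->
  exists m q3, [/\ q = m ++ q3, last a m = v & v \notin q3].
Proof.
elim/last_ind: q => [|q y IH].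
  by rewrite mem_seq1 => /eqP ->; exists [::], [::].
case: (eqVneq y v) => [->|Hyv] Hv.
  by exists (rcons q v), [::]; rewrite cats0 last_rcons.
have Hv' : v \in a :: q.
  by move: Hv; rewrite -rcons_cons mem_rcons in_cons eq_sym (negbTE Hyv).
have [m [q3 [-> Hl Hn]]] := IH Hv'.
exists m, (rcons q3 y); rewrite rcons_cat; split => //.
by rewrite mem_rcons in_cons eq_sym (negbTE Hyv).
Qed.

Lemma walk_cost_cat (V : finType) (w : {set V} -> rat) x p1 p2 :
  walk_cost w x (p1 ++ p2) = walk_cost w x p1 + walk_cost w (last x p1) p2.
Proof.
by elim: p1 x => [|y p1 IH] x /=; rewrite ?add0r // IH addrA.
Qed.

Lemma cost_ge0 (V : finType) (E B : {set {set V}}) (w : {set V} -> rat) :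
  (forall e, e \in E -> 0 < w e) ->
  forall a q, path (open_adj E B) a q -> 0 <= walk_cost w a q.
Proof.
move=> Hw a q; elim: q a => [|b q IH] a //= /andP [Hab Hq].
apply: addr_ge0; last exact: IH.
move: Hab; rewrite /open_adj /adj in_setD => /andP [_ /Hw]; exact: ltW.
Qed.

Lemma avoid_prefix {V : eqType} (s v : V) : forall (p : seq V) i,
  (forall j, (j < size p)%N -> last s (take j p) != v) -> (i < size p)%N ->
  v \notin s :: take i p.
Proof.
move=> p; elim: p s => [|y p IH] s i //= H Hi.
have Hs : s != v by have := H 0%N isT.
case: i Hi => [|i] Hi; first by rewrite /= mem_seq1 eq_sym.
rewrite /= in_cons eq_sym (negbTE Hs) /=.
apply: IH => // j Hj.
by have := H j.+1 Hj.
Qed.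

Lemma decomp {V : eqType} (v a : V) (q : seq V) : v \in a :: q ->
  exists q1 m q3, [/\ q = q1 ++ m ++ q3, last a q1 = v, last v m = v,
     v \notin belast a q1 & v \notin q3].
Proof.
move=> /first_split [q1 [r [-> H1 H2]]].
have : v \in v :: r by rewrite mem_head.
move=> /last_split [m [q3 [-> H3 H4]]].
by exists q1, m, q3.
Qed.

Lemma uniqify (V : finType) (E B : {set {set V}}) (w : {set V} -> rat) :
  (forall e, e \in E -> 0 < w e) ->
  forall n a q, (size q <= n)%N -> path (open_adj E B) a q ->
  exists q', [/\ path (open_adj E B) a q', last a q' = last a q, uniq (a :: q'),
     {subset a :: q' <= a :: q} & walk_cost w a q' <= walk_cost w a q].
Proof.
move=> Hw; elim=> [|n IH] a q Hs Hp.
  move: Hs; rewrite leqn0 => /nilP ->.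
  by exists [::]; split.
have [q3 [Hq3s [Hq3p Hq3l Hq3n Hq3sub Hq3c]]] : exists q3, (size q3 <= size q)%N /\ [/\
    path (open_adj E B) a q3, last a q3 = last a q, a \notin q3,
    {subset q3 <= q} & walk_cost w a q3 <= walk_cost w a q].
  case: (boolP (a \in q)) => Ha.
    have : a \in a :: q by rewrite mem_head.
    move=> /last_split [m [q3 [Eq Hm Hn]]].
    exists q3; move: Hp; rewrite Eq cat_path Hm => /andP [Hp1 Hp2].
    split; first by rewrite size_cat leq_addl.
    split => //.
    - by rewrite last_cat Hm.
    - by move=> x Hx; rewrite mem_cat Hx orbT.
    - rewrite walk_cost_cat Hm lerDr; exact: cost_ge0 Hp1.
  by exists q; split; [|split].
case: q3 Hq3s Hq3p Hq3l Hq3n Hq3sub Hq3c => [|b q4] Hq3s Hq3p Hq3l Hq3n Hq3sub Hq3c.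
  by exists [::]; split => // x; rewrite mem_seq1 => /eqP ->; rewrite mem_head.
move: Hq3p => /= /andP [Hab Hq4].
have Hs4 : (size q4 <= n)%N by rewrite -ltnS (leq_trans Hq3s).
have [q' [Hp' Hl' Hu' Hsub' Hc']] := IH b q4 Hs4 Hq4.
exists (b :: q'); split => /=.
- by rewrite Hab.
- by rewrite Hl' -Hq3l.
- move: Hu' => /= /andP [Hbq Huq]; rewrite Hbq Huq !andbT; apply/negP => /Hsub' Hab'.
  by move: Hq3n; rewrite Hab'.
- move=> x; rewrite in_cons => /orP [/eqP ->|/Hsub' Hx]; first by rewrite mem_head.
  by rewrite in_cons (Hq3sub _ Hx) orbT.
- by apply: le_trans Hq3c; rewrite /= lerD2l.
Qed.

Fixpoint seqs (V : finType) (n : nat) : seq (seq V) :=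
  if n is n'.+1 then [::] :: [seq x :: p | x <- enum V, p <- seqs V n'] else [:: [::]].

Lemma mem_seqs (V : finType) n (p : seq V) : (size p <= n)%N -> p \in seqs V n.
Proof.
elim: n p => [|n IH] [|x p] //= Hs.
rewrite in_cons; apply/orP; right.
by apply: (allpairs_f (fun x p => x :: p)); rewrite ?mem_enum ?IH.
Qed.

Lemma exists_min {T : eqType} (f : T -> rat) (l : seq T) x0 : x0 \in l ->
  exists2 y, y \in l & forall z, z \in l -> f y <= f z.
Proof.
elim: l x0 => // a l IH x0 _.
case: l IH => [|b l] IH.
  by exists a; [rewrite mem_head|move=> z; rewrite mem_seq1 => /eqP ->].
have [y Hy Hmin] := IH b (mem_head b l).
case: (leP (f a) (f y)) => Hle.
  exists a; first by rewrite mem_head.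
  by move=> z; rewrite in_cons => /orP [/eqP ->//|/Hmin]; apply: le_trans.
exists y; first by rewrite in_cons Hy orbT.
by move=> z; rewrite in_cons => /orP [/eqP ->|/Hmin //]; apply: ltW.
Qed.

Lemma shortest_exists (V : finType) (E B : {set {set V}}) (w : {set V} -> rat) s t q :
  (forall e, e \in E -> 0 < w e) ->
  path (open_adj E B) s q -> last s q = t ->
  exists d, shortest_dist E B w s t d /\ d <= walk_cost w s q.
Proof.
move=> Hw Hp Hl.
pose cand := [seq p <- seqs V #|V| | path (open_adj E B) s p && (last s p == t)].
have Hred : forall p, path (open_adj E B) s p -> last s p = t ->
    exists2 p', p' \in cand & walk_cost w s p' <= walk_cost w s p.
  move=> p Hpp Hpl.
  have [p' [Hp' Hl' Hu' _ Hc']] := uniqify Hw (leqnn (size p)) Hpp.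
  exists p' => //; rewrite mem_filter Hp' Hl' Hpl eqxx /=.
  apply: mem_seqs; move/card_uniqP: Hu' => /= Hc.
  have := max_card (mem (s :: p')); rewrite Hc => /= H; exact: ltnW.
have [q0 Hq0 _] := Hred q Hp Hl.
have [y Hy Hmin] := exists_min (walk_cost w s) Hq0.
move: (Hy); rewrite mem_filter => /andP [/andP [Hyp /eqP Hyl] _].
exists (walk_cost w s y); split.
  split; first by exists y.
  move=> p Hpp Hpl; have [p' Hp' Hc'] := Hred p Hpp Hpl.
  exact: le_trans (Hmin _ Hp') Hc'.
have [p' Hp' Hc'] := Hred q Hp Hl.
exact: le_trans (Hmin _ Hp') Hc'.
Qed.


Section G.
Context {V : finType}.
Implicit Types (S K : {set V}) (E B : {set {set V}}).

Definition delE E (v : V) := [set e in E | v \notin e].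
Definition rest E K := [set e in E | e \subset K].
Definition compK S E (v x : V) := v |: [set y in S :\ v | connect (adj (delE E v)) x y].

Lemma adj_sym E : symmetric (adj E).
Proof. by move=> x y; rewrite /adj setUC. Qed.

Lemma connect_symE E : connect_sym (adj E).
Proof. exact: sym_connect_sym (@adj_sym E). Qed.

Lemma adj_wf S E x y : wf_graph S E -> adj E x y -> [/\ x \in S, y \in S & x != y].
Proof.
move=> Hwf /Hwf [Hc Hs].
have -> : x != y by move: Hc; rewrite cards2; case: (x != y).
by move: Hs; rewrite subUset !sub1set => /andP [-> ->].
Qed.

Lemma adj_del E v x y : adj (delE E v) x y = [&& adj E x y, x != v & y != v].
Proof.
by rewrite /adj inE in_set2 negb_or (eq_sym v x) (eq_sym v y).
Qed.

Lemma path_inS S E a q : wf_graph S E -> a \in S -> path (adj E) a q -> {subset a :: q <= S}.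
Proof.
move=> Hwf; elim: q a => [|b q IH] a Ha /=.
  by move=> _ y; rewrite mem_seq1 => /eqP ->.
move=> /andP [Hab Hq] y; rewrite in_cons => /orP [/eqP ->//|Hy].
have [_ Hb _] := adj_wf Hwf Hab.
exact: IH Hb Hq y Hy.
Qed.

Lemma path_del E v a q : path (adj E) a q -> v \notin a :: q -> path (adj (delE E v)) a q.
Proof.
elim: q a => [|b q IH] a //= /andP [Hab Hq].
rewrite !in_cons !negb_or => /and3P [Hav Hbv Hq'].
rewrite adj_del Hab (eq_sym a) (eq_sym b) Hav Hbv /=.
by apply: IH => //; rewrite in_cons negb_or Hbv.
Qed.

Lemma del_sub E v a b : adj (delE E v) a b -> adj E a b.
Proof. by rewrite adj_del => /andP []. Qed.

Lemma path_del_avoid E v a q : path (adj (delE E v)) a q -> a != v -> v \notin a :: q.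
Proof.
elim: q a => [|b q IH] a /=; first by rewrite mem_seq1 eq_sym.
rewrite adj_del => /andP [/and3P [_ Hav Hbv] Hq] _.
by rewrite in_cons negb_or eq_sym Hav /=; apply: IH.
Qed.

Lemma inK S E v x y : (y \in compK S E v x) =
  (y == v) || [&& y \in S, y != v & connect (adj (delE E v)) x y].
Proof. by rewrite /compK in_setU1 inE in_setD1 andbA (andbC (y != v)) -andbA. Qed.

Lemma inKn S E v x y : y != v -> (y \in compK S E v x) =
  (y \in S) && connect (adj (delE E v)) x y.
Proof. by move=> H; rewrite inK (negbTE H). Qed.

Lemma compS S E v x : v \in S -> compK S E v x \subset S.
Proof.
move=> Hv; apply/subsetP => y; rewrite inK => /orP [/eqP ->//|/and3P [Hs _ _]//].
Qed.

Lemma L1 S E v x a q : wf_graph S E -> a \in compK S E v x -> path (adj E) a q ->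
  v \notin belast a q -> {subset a :: q <= compK S E v x}.
Proof.
move=> Hwf; elim: q a => [|b q IH] a Ha /=.
  by move=> _ _ y; rewrite mem_seq1 => /eqP ->.
move=> /andP [Hab Hq]; rewrite in_cons negb_or => /andP [Hav Hbl].
have [_ Hb _] := adj_wf Hwf Hab.
have HbK : b \in compK S E v x.
  rewrite inK; case: (eqVneq b v) => //= Hbv.
  have Hav' : a != v by rewrite eq_sym.
  rewrite Hb /=; move: Ha; rewrite inKn // => /andP [_ Hxa].
  apply: connect_trans Hxa (connect1 _).
  by rewrite adj_del Hab (eq_sym a) Hav Hbv.
move=> y; rewrite in_cons => /orP [/eqP ->//|Hy].
exact: IH HbK Hq Hbl y Hy.
Qed.

Lemma L1' S E v x q : wf_graph S E -> v \in S -> path (adj E) v q -> v \notin q ->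
  last v q \in compK S E v x -> {subset v :: q <= compK S E v x}.
Proof.
move=> Hwf Hv; case: q => [|b q].
  by move=> _ _ _ y; rewrite mem_seq1 => /eqP ->; rewrite inK eqxx.
move=> /= /andP [Hvb Hq] Hnot Hl.
have [_ Hb _] := adj_wf Hwf Hvb.
have Hd := path_del Hq Hnot.
have HS := path_inS Hwf Hb Hq.
have Hlm := mem_last b q.
have Hlv : last b q != v by apply/eqP => Ev; move: Hnot; rewrite -Ev Hlm.
move: Hl; rewrite inKn // => /andP [_ Hxl].
have Hxb : connect (adj (delE E v)) x b.
  apply: connect_trans Hxl _; rewrite connect_symE.
  exact: path_connect Hd _ Hlm.
move=> y; rewrite in_cons => /orP [/eqP ->|Hy]; first by rewrite inK eqxx.
rewrite inK HS //=; apply/orP; right; apply/andP; split.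
  by apply/eqP => Ev; move: Hnot; rewrite -Ev Hy.
exact: connect_trans Hxb (path_connect Hd Hy).
Qed.

Lemma L2 E K a q : {subset a :: q <= K} -> path (adj E) a q -> path (adj (rest E K)) a q.
Proof.
elim: q a => [|b q IH] a //= Hsub /andP [Hab Hq].
have -> : adj (rest E K) a b.
  move: (Hab); rewrite /adj inE => -> /=; rewrite subUset !sub1set; apply/andP; split; apply: Hsub.
    by rewrite mem_head.
  by rewrite in_cons mem_head orbT.
by apply: IH Hq => y Hy; apply: Hsub; rewrite in_cons Hy orbT.
Qed.

Lemma rest_setD E B K : rest (E :\: B) K = rest E K :\: B.
Proof. by apply/setP => e; rewrite !inE andbA. Qed.

Lemma L2o E B K a q : {subset a :: q <= K} -> path (open_adj E B) a q ->
  path (open_adj (rest E K) B) a q.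
Proof. by move=> Hs Hp; rewrite /open_adj -rest_setD; apply: L2. Qed.

Lemma open_rest E B K a q : path (open_adj (rest E K) B) a q -> path (open_adj E B) a q.
Proof.
apply: sub_path => x y; rewrite /open_adj /adj !inE => /andP [-> /andP [-> _]].
by [].
Qed.

Lemma open_adjE E B a q : path (open_adj E B) a q -> path (adj E) a q.
Proof. by apply: sub_path => x y; rewrite /open_adj /adj !inE => /andP []. Qed.

Lemma open_adjI E B : open_adj E (B :&: E) =2 open_adj E B.
Proof. by move=> x y; rewrite /open_adj /adj !inE; case: ([set x; y] \in E); rewrite ?andbF ?andbT. Qed.

Lemma compK_card S E v x u : v \in S -> u \in S -> u != v ->
  ~~ connect (adj (delE E v)) x u -> (#|compK S E v x| < #|S|)%N.
Proof.
move=> Hv Hu Huv Hc; apply: proper_card; apply/properP; split; first exact: compS.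
by exists u => //; rewrite inKn // Hu (negbTE Hc).
Qed.

Lemma compK_wf S E v x : wf_graph S E -> v \in S ->
  wf_graph (compK S E v x) (rest E (compK S E v x)).
Proof.
move=> Hwf Hv e; rewrite inE => /andP [/Hwf [Hc _] Hs]; by [].
Qed.

Lemma compK_conn S E v x : wf_graph S E -> gconnected S E -> v \in S -> x \in S -> x != v ->
  gconnected (compK S E v x) (rest E (compK S E v x)).
Proof.
move=> Hwf Hcon Hv Hx Hxv.
have HxK : x \in compK S E v x by rewrite inKn // Hx connect0.
suff H : forall y, y \in compK S E v x -> connect (adj (rest E (compK S E v x))) x y.
  move=> y z Hy Hz; apply: connect_trans (H z Hz).
  by rewrite connect_symE; apply: H.
move=> y Hy.
case: (eqVneq y v) => [->|Hyv].
  have /connectP [p Hp Hl] := Hcon x v Hx Hv.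
  have : v \in x :: p by rewrite Hl mem_last.
  move=> /first_split [q1 [r [Ep H1 H2]]].
  move: Hp; rewrite Ep cat_path => /andP [Hp1 _].
  have Hsub := L1 Hwf HxK Hp1 H2.
  by apply/connectP; exists q1 => //; apply: L2.
move: (Hy); rewrite inKn // => /andP [HyS /connectP [p Hp ->]].
apply/connectP; exists p => //; apply: L2; last first.
  by apply: sub_path Hp => a b; rewrite adj_del => /andP [].
have Hav := path_del_avoid Hp Hxv.
have HS := path_inS Hwf Hx (sub_path (fun a b => (@del_sub E v a b)) Hp).
move=> z Hz; rewrite inKn; last by apply/eqP => Ez; move: Hav; rewrite -Ez Hz.
by rewrite HS //=; apply: path_connect Hp _ Hz.
Qed.
End G.


Section S4.
Context {V : finType}.
Implicit Types (S K : {set V}) (E B : {set {set V}}).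

Definition artb S E (v : V) := (v \in S) &&
  ~~ [forall x in S :\ v, [forall y in S :\ v, connect (adj (delE E v)) x y]].

Lemma artb_none S E : (forall v, ~~ artb S E v) -> no_articulation_point S E.
Proof.
move=> H v [Hv Hnc]; apply: Hnc => x y Hx Hy.
move: (H v); rewrite /artb Hv /= negbK => /forallP /(_ x) /implyP /(_ Hx).
by move=> /forallP /(_ y) /implyP /(_ Hy).
Qed.

Lemma artb_some S E v x : artb S E v -> x \in S -> x != v ->
  exists u, [/\ u \in S, u != v & ~~ connect (adj (delE E v)) x u].
Proof.
move=> /andP [Hv /forallPn [y]]; rewrite negb_imply => /andP [Hy /forallPn [z]].
rewrite negb_imply => /andP [Hz Hyz] Hx Hxv.
move: Hy Hz; rewrite !in_setD1 => /andP [Hyv HyS] /andP [Hzv HzS].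
case Hxy : (connect (adj (delE E v)) x y); last by exists y; rewrite Hxy.
case Hxz : (connect (adj (delE E v)) x z); last by exists z; rewrite Hxz.
move: Hyz; rewrite (connect_trans _ Hxz) //.
by rewrite connect_symE.
Qed.

Definition filt (rev : {set {set V}}) E (h : seq V) :=
  [set e in rev | (e \in E) && has (fun x => x \in e) h].

Fixpoint Arec (A : strategy V) (n : nat) S E (w : {set V} -> rat) (s t : V) (k : nat)
    (h : seq V) (rev : {set {set V}}) {struct n} : V :=
  match n with
  | 0 => A S E w s t k h (filt rev E h)
  | n'.+1 =>
    match [pick v | artb S E v] with
    | None => A S E w s t k h (filt rev E h)
    | Some v =>
      if [&& v != s, v != t & ~~ connect (adj (delE E v)) s t] then
        if v \in h then
          Arec A n' (compK S E v t) (rest E (compK S E v t)) w v t k (drop (index v h) h) rev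
        else Arec A n' (compK S E v s) (rest E (compK S E v s)) w s v k h rev
      else Arec A n' (compK S E v (if v == s then t else s))
             (rest E (compK S E v (if v == s then t else s))) w s t k h rev
    end
  end.

Lemma filtE (Es0 rev : {set {set V}}) E h :
  rev \subset Es0 -> (forall e, e \in Es0 -> has (fun x => x \in e) h -> e \in rev) ->
  filt rev E h = revealed (Es0 :&: E) h.
Proof.
move=> Hs Hc; apply/setP => e; rewrite !inE.
case Hh : (has _ h); rewrite ?andbF //= !andbT.
case HE : (e \in E); rewrite ?andbF //= andbT.
case He : (e \in rev); first by rewrite (subsetP Hs).
by case He0 : (e \in Es0) => //; rewrite (Hc e He0 Hh) in He.
Qed.

Lemma rest_sub E K : rest E K \subset E.
Proof. by apply/subsetP => e; rewrite inE => /andP []. Qed.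

End S4.


Section S5.
Context {V : finType} (R : realType) (F : {set V} -> {set {set V}} -> Prop) (C : R)
  (k : nat) (A : strategy V) (Es0 : {set {set V}}) (w : {set V} -> rat).
Hypothesis C0 : 0 <= C.
Hypothesis HA : forall S E w s t Es, road_map S E w s t k Es -> F S E ->
     no_articulation_point S E -> ratio_at_most A S E w s t k Es C.

Definition rho_ok (rho : seq V -> {set {set V}}) (s : V) :=
  forall h, rho (s :: h) \subset Es0 /\
    (forall e, e \in Es0 -> has (fun x => x \in e) (s :: h) -> e \in rho (s :: h)).

Definition goal E s t (g : seq V -> V) :=
  exists p, [/\ valid g s t p, last s p = t, path (open_adj E Es0) s p &
     forall q, path (open_adj E Es0) s q -> last s q = t ->
        ratr (walk_cost w s p) <= C * ratr (walk_cost w s q)].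

Lemma goal_refl (E : {set {set V}}) (s : V) (g : seq V -> V) : (forall e, e \in E -> 0 < w e) -> goal E s s g.
Proof.
move=> Hw; exists [::]; split => // q Hq _.
rewrite rmorph0 mulr_ge0 // ler0q; exact: cost_ge0 Hq.
Qed.

Lemma base_case (S : {set V}) (E : {set {set V}}) (s t : V) rho (g : seq V -> V) :
  wf_graph S E -> gconnected S E -> (forall e, e \in E -> 0 < w e) ->
  s \in S -> t \in S -> (#|Es0 :&: E| <= k)%N -> connect (open_adj E Es0) s t -> F S E ->
  rho_ok rho s -> s != t -> no_articulation_point S E ->
  (forall h, g (s :: h) = A S E w s t k (s :: h) (filt (rho (s :: h)) E (s :: h))) ->
  goal E s t g.
Proof.
move=> Hwf Hcon Hw Hs Ht Hk Hst HFS Hrho Hst' Hnap Hg.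
have Hpr : (Es0 :&: E) \proper E.
  move: (Hst) => /connectP [[|b q] Hq Ht']; first by move: Hst'; rewrite Ht' eqxx.
  move: Hq => /= /andP [Hsb _]; apply/properP; split; first exact: subsetIr.
  exists [set s; b]; first by move: Hsb; rewrite /open_adj /adj inE => /andP [].
  by move: Hsb; rewrite /open_adj /adj !inE => /andP [/negbTE -> _].
have Hrm : road_map S E w s t k (Es0 :&: E).
  split => //; split => //; by rewrite (eq_connect (open_adjI E Es0)).
have [n0] := HA Hrm HFS Hnap.
set p := run _ _ _ _ _ _ _ _ _ => /= [[Hl Hp Hb]].
exists p; split => //.
- rewrite /p run_runf.
  move: (@runf_valid _ (fun h => A S E w s t k h (revealed (Es0 :&: E) h)) s t n0).
  apply: valid_ext => h.
  rewrite Hg; congr (A _ _ _ _ _ _ _ _); symmetry; apply: filtE; by case: (Hrho h).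
- by rewrite -(eq_path (open_adjI E Es0)).
- move=> q Hq Hqt.
  have Hq' : path (open_adj E (Es0 :&: E)) s q by rewrite (eq_path (open_adjI E Es0)).
  have [d [Hd Hdq]] := shortest_exists Hw Hq' Hqt.
  apply: le_trans (Hb d Hd) _; apply: ler_wpM2l => //; by rewrite ler_rat.
Qed.

End S5.


Lemma last_take_mem {T : eqType} (s : T) p i : last s (take i p) \in s :: p.
Proof.
move: (mem_last s (take i p)); rewrite !in_cons => /orP [->//|/mem_take ->].
by rewrite orbT.
Qed.

Section S6.
Context {V : finType} (R : realType) (F : {set V} -> {set {set V}} -> Prop) (C : R)
  (k : nat) (A : strategy V) (Es0 : {set {set V}}) (w : {set V} -> rat).
Hypothesis C0 : 0 <= C.
Hypothesis HA : forall S E w s t Es, road_map S E w s t k Es -> F S E ->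
     no_articulation_point S E -> ratio_at_most A S E w s t k Es C.
Hypothesis HF : monotone_family F.

Lemma main n : forall (S : {set V}) (E : {set {set V}}) (s t : V) rho,
  (#|S| <= n)%N -> wf_graph S E -> gconnected S E -> (forall e, e \in E -> 0 < w e) ->
  s \in S -> t \in S -> (#|Es0 :&: E| <= k)%N -> connect (open_adj E Es0) s t -> F S E ->
  rho_ok Es0 rho s -> goal C Es0 w E s t (fun h => Arec A n S E w s t k h (rho h)).
Proof.
elim: n => [|n IH] S E s t rho HS Hwf Hcon Hw Hs Ht Hk Hst HFS Hrho.
  have H : (0 < #|S|)%N by apply/card_gt0P; exists s.
  by have := leq_trans H HS.
case: (eqVneq s t) => [<-|Hst']; first exact: goal_refl.
rewrite /goal /=.
case: pickP => [v Hv|Hnone]; last first.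
  apply: (base_case C0 HA Hwf Hcon Hw Hs Ht Hk Hst HFS Hrho Hst') => //.
  by apply: artb_none => v; rewrite Hnone.
have Hvs : v \in S by case/andP: Hv.
have HwR : forall K, forall e, e \in rest E K -> 0 < w e.
  by move=> K e; rewrite inE => /andP [/Hw].
have HkR : forall K, (#|Es0 :&: rest E K| <= k)%N.
  move=> K; apply: leq_trans Hk; apply: subset_leq_card; apply: setIS; exact: rest_sub.
have HFR : forall x, F (compK S E v x) (rest E (compK S E v x)).
  move=> x; apply: (HF (compK_wf (x:=x) Hwf Hvs) (compS E x Hvs) (rest_sub _ _) HFS).
case Hg : [&& v != s, v != t & ~~ connect (adj (delE E v)) s t]; rewrite /=.
-
  move/and3P: Hg => [Hvs' Hvt Hnc].
  have Hsv : s != v by rewrite eq_sym.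
  have Htv : t != v by rewrite eq_sym.
  have Hs1 : s \in compK S E v s by rewrite inKn // Hs connect0.
  have Hv1 : v \in compK S E v s by rewrite inK eqxx.
  have Ht1 : t \notin compK S E v s by rewrite inKn // negb_and Hnc orbT.
  have Hv2 : v \in compK S E v t by rewrite inK eqxx.
  have Ht2 : t \in compK S E v t by rewrite inKn // Ht connect0.
  have Hnc' : ~~ connect (adj (delE E v)) t s by rewrite connect_symE.
  have Hc1 : (#|compK S E v s| <= n)%N.
    by rewrite -ltnS (leq_trans (compK_card Hvs Ht Htv Hnc) HS).
  have Hc2 : (#|compK S E v t| <= n)%N.
    by rewrite -ltnS (leq_trans (compK_card Hvs Hs Hsv Hnc') HS).
  have Hdec : forall q, path (open_adj E Es0) s q -> last s q = t ->
      exists q1 m q3, [/\ walk_cost w s q = walk_cost w s q1 + walk_cost w v m + walk_cost w v q3,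
        path (open_adj (rest E (compK S E v s)) Es0) s q1, last s q1 = v,
        path (open_adj (rest E (compK S E v t)) Es0) v q3 &
        (last v q3 = t /\ 0 <= walk_cost w v m)].
    move=> q Hq Hqt.
    have Hvq : v \in s :: q.
      apply/negPn/negP => Hn; have Hd := path_del (open_adjE Hq) Hn.
      have : connect (adj (delE E v)) s t by apply/connectP; exists q.
      by rewrite (negbTE Hnc).
    have [q1 [m [q3 [Eq H1 H2 H3 H4]]]] := decomp Hvq.
    move: Hq; rewrite Eq cat_path H1 cat_path H2 => /and3P [Hq1 Hm Hq3].
    have Hl3 : last v q3 = t by move: Hqt; rewrite Eq !last_cat H1 H2.
    exists q1, m, q3; split => //.
    - by rewrite !walk_cost_cat H1 H2 addrA.
    - exact: L2o (L1 Hwf Hs1 (open_adjE Hq1) H3) Hq1.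
    - by apply: (L2o _ Hq3); apply: L1' Hwf Hvs (open_adjE Hq3) H4 _; rewrite Hl3.
    - by split => //; exact: cost_ge0 Hw _ _ Hm.
  have /connectP [q0 Hq0 Hq0t] := Hst.
  have [q1 [m [q3 [_ Hq1 Hl1 Hq3 [Hl3 _]]]]] := Hdec q0 Hq0 (esym Hq0t).
  have [p1 [Hv1p Hl1p Hp1 Hb1]] := IH _ _ s v rho Hc1 (compK_wf (x:=s) Hwf Hvs)
     (compK_conn Hwf Hcon Hvs Hs Hsv) (HwR _) Hs1 Hv1 (HkR _)
     (introT connectP (ex_intro2 _ _ q1 Hq1 (esym Hl1))) (HFR s) Hrho.
  have Hav1 : forall j, (j < size p1)%N -> last s (take j p1) != v.
    by move=> j Hj; have [] := Hv1p j Hj.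
  have [p1' Ep1] : exists p1', p1 = rcons p1' v.
    move: Hl1p; case/lastP: p1 {Hv1p Hp1 Hb1 Hav1} => [/= Esv|p1' y].
      by move: Hsv; rewrite Esv eqxx.
    by rewrite last_rcons => ->; exists p1'.
  have Hnotv : v \notin s :: p1'.
    have : v \notin s :: take (size p1') p1.
      by apply: avoid_prefix Hav1 _; rewrite Ep1 size_rcons.
    by rewrite Ep1 -cats1 take_size_cat.
  pose rho2 := fun h => rho (s :: p1 ++ behead h).
  have Hrho2 : rho_ok Es0 rho2 v.
    move=> h; have [H1 H2] := Hrho (p1 ++ h); split => // e He Hh; apply: H2 => //.
    move: Hh; rewrite /= has_cat => /orP [Hve|->]; last by rewrite !orbT.
    apply/orP; right; apply/orP; left; apply/hasP; exists v => //.
    by rewrite Ep1 mem_rcons mem_head.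
  have [r [Hvr Hlr Hpr Hbr]] := IH _ _ v t rho2 Hc2 (compK_wf (x:=t) Hwf Hvs)
     (compK_conn Hwf Hcon Hvs Ht Htv) (HwR _) Hv2 Ht2 (HkR _)
     (introT connectP (ex_intro2 _ _ q3 Hq3 (esym Hl3))) (HFR t) Hrho2.
  exists (p1 ++ r); split.
  + apply: (valid_cat (v:=v)) Hl1p _.
    * move=> i Hi; have [E1' E2'] := Hv1p i Hi; split; last first.
        apply/eqP => Et.
        have : last s (take i p1) \in compK S E v s.
          exact: (path_inS (compK_wf (x:=s) Hwf Hvs) Hs1 (open_adjE Hp1) (last_take_mem _ _ _)).
        by rewrite Et (negbTE Ht1).
      rewrite E1' (negbTE (avoid_prefix Hav1 Hi)).
      by [].
    * move=> i Hi; have [E1' E2'] := Hvr i Hi; split => //.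
      have Eh : s :: p1 ++ take i r = (s :: p1') ++ v :: take i r.
        by rewrite Ep1 cat_rcons.
      have Hin : v \in s :: p1 ++ take i r by rewrite Eh mem_cat mem_head orbT.
      have Hidx : drop (index v (s :: p1 ++ take i r)) (s :: p1 ++ take i r) = v :: take i r.
        rewrite Eh index_cat (negbTE Hnotv) /= eqxx addn0.
        by rewrite drop_size_cat.
      by rewrite Hin Hidx E1'.
  + by rewrite last_cat Hl1p.
  + rewrite cat_path (open_rest Hp1) /= Hl1p; exact: open_rest Hpr.
  + move=> q Hq Hqt; have [q1' [m' [q3' [Ec Hq1' Hl1' Hq3' [Hl3' Hm']]]]] := Hdec q Hq Hqt.
    rewrite walk_cost_cat Hl1p Ec !rmorphD /=.
    have B1 := Hb1 q1' Hq1' Hl1'.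
    have B3 := Hbr q3' Hq3' Hl3'.
    apply: le_trans (lerD B1 B3) _; rewrite -mulrDr; apply: ler_wpM2l => //.
    by rewrite -addrA lerD2l lerDr ler0q.
-
  set x := if v == s then t else s.
  have [HxS Hxv] : x \in S /\ x != v.
    rewrite /x; case: (eqVneq v s) => [Evs|Hvs']; split => //.
      by rewrite -Evs eq_sym in Hst'.
    by rewrite eq_sym.
  have HsK : s \in compK S E v x.
    rewrite /x; case: (eqVneq v s) => [<-|Hvs']; first by rewrite inK eqxx.
    by rewrite inKn 1?eq_sym // Hs connect0.
  have HtK : t \in compK S E v x.
    case: (eqVneq t v) => [->|Htv]; first by rewrite inK eqxx.
    rewrite inKn // Ht /= /x; case: (eqVneq v s) => [Evs|Hvs']; first exact: connect0.
    by move: Hg; rewrite Hvs' (eq_sym v t) Htv /= => /negbFE.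
  have [u [HuS Huv Hu]] := artb_some Hv HxS Hxv.
  have Hc : (#|compK S E v x| <= n)%N.
    by rewrite -ltnS (leq_trans (compK_card Hvs HuS Huv Hu) HS).
  have Hsc : forall q, path (open_adj E Es0) s q -> last s q = t ->
      exists2 q', path (open_adj (rest E (compK S E v x)) Es0) s q' &
        (last s q' = t /\ walk_cost w s q' <= walk_cost w s q).
    move=> q Hq Hqt; case: (boolP (v \in s :: q)) => Hvq.
    + have [q1 [m [q3 [Eq H1 H2 H3 H4]]]] := decomp Hvq.
      move: Hq; rewrite Eq cat_path H1 cat_path H2 => /and3P [Hq1 Hm Hq3].
      have Hl3 : last v q3 = t by move: Hqt; rewrite Eq !last_cat H1 H2.
      have Sub1 := L1 Hwf HsK (open_adjE Hq1) H3.
      have Sub3 : {subset v :: q3 <= compK S E v x}.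
        by apply: L1' Hwf Hvs (open_adjE Hq3) H4 _; rewrite Hl3.
      exists (q1 ++ q3).
        apply: L2o; last by rewrite cat_path Hq1 H1.
        move=> y; rewrite -cat_cons mem_cat => /orP [/Sub1 //|Hy].
        by apply: Sub3; rewrite in_cons Hy orbT.
      split; first by rewrite last_cat H1.
      rewrite !walk_cost_cat H1 H2 lerD2l lerDr; exact: cost_ge0 Hw _ _ Hm.
    + have Hd := path_del (open_adjE Hq) Hvq.
      exists q => //; apply: (L2o _ Hq) => y Hy.
      have Hyv : y != v by apply/eqP => E'; rewrite -E' Hy in Hvq.
      rewrite inKn // (path_inS Hwf Hs (open_adjE Hq) Hy) /= /x ifN.
        exact: path_connect Hd _ Hy.
      by apply/eqP => Evs; rewrite Evs mem_head in Hvq.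
  have /connectP [q0 Hq0 Hq0t] := Hst.
  have [q0' Hq0' [Hl0' _]] := Hsc q0 Hq0 (esym Hq0t).
  have [p [Hvp Hlp Hpp Hbp]] := IH _ _ s t rho Hc (compK_wf (x:=x) Hwf Hvs)
     (compK_conn Hwf Hcon Hvs HxS Hxv) (HwR _) HsK HtK (HkR _)
     (introT connectP (ex_intro2 _ _ q0' Hq0' (esym Hl0'))) (HFR x) Hrho.
  exists p; split => //.
  + exact: open_rest Hpp.
  + move=> q Hq Hqt; have [q' Hq' [Hl' Hc']] := Hsc q Hq Hqt.
    apply: le_trans (Hbp q' Hq' Hl') _; apply: ler_wpM2l => //; by rewrite ler_rat.
Qed.

End S6.


Theorem mainTheorem4 (R : realType) (V : finType)
    (F : {set V} -> {set {set V}} -> Prop) (C : R) (k : nat) (A : strategy V) :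
  monotone_family F -> 1 <= C ->
  (forall S E w s t Es, road_map S E w s t k Es -> F S E ->
     no_articulation_point S E -> ratio_at_most A S E w s t k Es C) ->
  exists A' : strategy V,
    forall S E w s t Es, road_map S E w s t k Es -> F S E ->
      ratio_at_most A' S E w s t k Es C.
Proof.
move=> HF HC HA.
have C0 : 0 <= C := le_trans ler01 HC.
exists (fun (S : {set V}) E w s t k h rev => Arec A #|S| S E w s t k h rev).
move=> S E w s t Es [Hwf Hcon Hw [Hs Ht] [Hpr Hk Hst]] HFS.
have Hk' : (#|Es :&: E| <= k)%N.
  by apply: leq_trans Hk; apply: subset_leq_card; apply: subsetIl.
have Hrho : rho_ok Es (revealed Es) s.
  move=> h; split; first by apply/subsetP => e; rewrite inE => /andP [].
  by move=> e He Hh; rewrite inE He Hh.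
have [p [Hv Hl Hp Hb]] : goal C Es w E s t (fun h => Arec A #|S| S E w s t k h (revealed Es h)).
  exact: (main C0 HA HF (leqnn #|S|) Hwf Hcon Hw Hs Ht Hk' Hst HFS Hrho).
exists (size p) => /=.
have Er := valid_runf Hv.
rewrite run_runf Er; split => //.
by move=> d [[q [Hq [Hqt <-]]] _]; apply: Hb.
Qed.
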